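(* ($\mathrm{ZFCU}_R$) Let $\kappa$ be an infinite cardinal. Assume the DC$_\kappa$-scheme holds and the class $\mathcal{A}$ of urelements is a proper class. Then $\kappa$ is realized.
   Context: $\mathrm{ZFCU}_R$ is ZFC with urelements (language $\{\in,\mathcal{A}\}$, $\mathcal{A}$ the urelement predicate), formulated with Replacement rather than Collection, with AC. ''$\mathcal{A}$ is a proper class'' means there is no set whose members are exactly the urelements. A set is realized if it is equinumerous with some set of urelements. DC$_\kappa$-scheme: for every formula $\varphi$ and parameter $u$, if $\forall x\exists y\varphi(x,y,u)$ then there is a function $f$ with domain $\kappa$ such that $\varphi(f\restriction\alpha,f(\alpha),u)$ for all $\alpha<\kappa$. *)

(* Defs.v *)
(* Semantic formalization of ZFCU_R: a statement of the form
   "ZFCU_R + DC_kappa-scheme |- (A is a proper class -> kappa is realized)"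
   is rendered (via completeness) as: in every model of ZFCU_R, for every
   kappa that the model thinks is an infinite cardinal, if the model satisfies
   every instance of the DC_kappa-scheme and thinks A is a proper class, then
   the model thinks kappa is realized. *)
From Stdlib Require Import Arith.

Set Implicit Arguments.

(* First-order formulas in the language {∈, A} (with =), de Bruijn indices. *)
Inductive form : Type :=
| FMem : nat -> nat -> form
| FEq  : nat -> nat -> form
| FUr  : nat -> form
| FBot : form
| FImp : form -> form -> form
| FAll : form -> form.             (* binds var 0 *)

Fixpoint wf (n : nat) (p : form) : Prop :=
  match p with
  | FMem i j => i < n /\ j < n
  | FEq i j => i < n /\ j < n
  | FUr i => i < n
  | FBot => True
  | FImp a b => wf n a /\ wf n b
  | FAll a => wf (S n) a
  end.

Definition scons {M : Type} (x : M) (e : nat -> M) : nat -> M :=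
  fun n => match n with 0 => x | S k => e k end.

Section Model.
Variables (M : Type) (mem : M -> M -> Prop) (U : M -> Prop).

Fixpoint sat (e : nat -> M) (p : form) : Prop :=
  match p with
  | FMem i j => mem (e i) (e j)
  | FEq i j => e i = e j
  | FUr i => U (e i)
  | FBot => False
  | FImp a b => sat e a -> sat e b
  | FAll a => forall x : M, sat (scons x e) a
  end.

Definition isSet (x : M) : Prop := ~ U x.

Definition empty (x : M) : Prop := isSet x /\ forall w, ~ mem w x.

Definition upair (a b s : M) : Prop :=
  isSet s /\ forall z, mem z s <-> (z = a \/ z = b).

Definition opair (a b p : M) : Prop :=
  isSet p /\ forall z, mem z p <-> (upair a a z \/ upair a b z).

Definition succ_of (y z : M) : Prop :=
  isSet z /\ forall w, mem w z <-> (mem w y \/ w = y).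

Definition subset_of (z x : M) : Prop :=
  isSet z /\ forall w, mem w z -> mem w x.

Definition rel (r a b : M) : Prop := exists p, mem p r /\ opair a b p.

Definition well_ordering (r x : M) : Prop :=
  isSet r /\
  (forall p, mem p r -> exists a b, mem a x /\ mem b x /\ opair a b p) /\
  (forall a, mem a x -> ~ rel r a a) /\
  (forall a b c, mem a x -> mem b x -> mem c x -> rel r a b -> rel r b c -> rel r a c) /\
  (forall a b, mem a x -> mem b x -> a = b \/ rel r a b \/ rel r b a) /\
  (forall z, subset_of z x -> (exists w, mem w z) ->
     exists m, mem m z /\ forall w, mem w z -> ~ rel r w m).

Definition bijection (f x y : M) : Prop :=
  isSet f /\
  (forall p, mem p f -> exists a b, mem a x /\ mem b y /\ opair a b p) /\
  (forall a, mem a x -> exists b, rel f a b) /\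
  (forall a b b', rel f a b -> rel f a b' -> b = b') /\
  (forall a a' b, rel f a b -> rel f a' b -> a = a') /\
  (forall b, mem b y -> exists a, rel f a b).

Definition equinumerous (x y : M) : Prop :=
  isSet x /\ isSet y /\ exists f, bijection f x y.

Definition transitive_set (x : M) : Prop :=
  isSet x /\ forall y, mem y x -> isSet y /\ forall z, mem z y -> mem z x.

Definition ordinal (x : M) : Prop :=
  transitive_set x /\ forall y, mem y x -> transitive_set y.

Definition cardinal (k : M) : Prop :=
  ordinal k /\ forall a, mem a k -> ~ equinumerous a k.

Definition natural (n : M) : Prop :=
  ordinal n /\
  forall m, (m = n \/ mem m n) -> (empty m \/ exists y, succ_of y m).

Definition finite (x : M) : Prop := exists n, natural n /\ equinumerous x n.

Definition infinite_cardinal (k : M) : Prop := cardinal k /\ ~ finite k.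

Definition realized (x : M) : Prop :=
  exists s, isSet s /\ (forall a, mem a s -> U a) /\ equinumerous x s.

Definition A_proper_class : Prop :=
  ~ exists s, isSet s /\ forall x, mem x s <-> U x.

Definition func (f : M) : Prop :=
  isSet f /\ (forall p, mem p f -> exists a b, opair a b p) /\
  (forall a b b', rel f a b -> rel f a b' -> b = b').

Definition restr (f a r : M) : Prop :=
  isSet r /\ forall p, mem p r <-> (mem p f /\ exists x y, opair x y p /\ mem x a).

(* ZFCU_R (Replacement instead of Collection, with AC) *)
Record ZFCU_R : Prop := {
  ax_urelements : forall x, U x -> forall y, ~ mem y x;
  ax_ext : forall x y, isSet x -> isSet y -> (forall z, mem z x <-> mem z y) -> x = y;
  ax_found : forall x, (exists y, mem y x) ->
               exists y, mem y x /\ ~ exists z, mem z y /\ mem z x;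
  ax_pair : forall a b, exists s, upair a b s;
  ax_union : forall x, isSet x -> exists s, isSet s /\
               forall z, mem z s <-> exists y, mem y x /\ mem z y;
  ax_power : forall x, isSet x -> exists p, isSet p /\
               forall z, mem z p <-> subset_of z x;
  ax_inf : exists i, isSet i /\ (exists e, empty e /\ mem e i) /\
             forall y, mem y i -> exists z, succ_of y z /\ mem z i;
  ax_sep : forall (phi : form) (e : nat -> M) (a : M), isSet a ->
             exists b, isSet b /\
               forall x, mem x b <-> (mem x a /\ sat (scons x e) phi);
  ax_repl : forall (phi : form) (e : nat -> M) (a : M), isSet a ->
             (forall x, mem x a -> exists y, sat (scons x (scons y e)) phi /\
                 forall y', sat (scons x (scons y' e)) phi -> y' = y) ->
             exists b, isSet b /\
               forall y, mem y b <-> exists x, mem x a /\ sat (scons x (scons y e)) phi;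
  ax_choice : forall x, isSet x -> exists r, well_ordering r x
}.

Definition env3 (x y u : M) : nat -> M :=
  fun n => match n with 0 => x | 1 => y | _ => u end.

Definition DC_scheme (k : M) : Prop :=
  forall phi : form, wf 3 phi -> forall u : M,
    (forall x, exists y, sat (env3 x y u) phi) ->
    exists f, func f /\ (forall a, (exists b, rel f a b) <-> mem a k) /\
      forall a, mem a k ->
        exists r b, restr f a r /\ rel f a b /\ sat (env3 r b u) phi.

End Model.

(* Main.v *)
Require Import Defs.
From Stdlib Require Import Classical Arith Lia.

Definition cmpf (i j : nat) : form :=
  FImp (FImp (FMem i j) FBot) (FImp (FImp (FEq i j) FBot) (FMem j i)).

Lemma trich (M : Type) (mem : M -> M -> Prop) (U : M -> Prop) :
  ZFCU_R mem U -> forall k, ordinal mem U k ->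
  forall a b, mem a k -> mem b k -> mem a b \/ a = b \/ mem b a.
Proof.
  intros Z k Hk a b Ha Hb.
  destruct Hk as [[Hks Hkt] Hel].
  apply NNPP; intro Hn.
  destruct (ax_sep Z (FImp (FAll (FImp (FMem 0 2) (cmpf 1 0))) FBot) (fun _ => k) Hks)
    as [X [HXs HX]].
  assert (HaX : mem a X).
  { apply HX. split; [exact Ha|]. cbn. intro H. specialize (H b Hb). tauto. }
  destruct (ax_found Z X (ex_intro _ a HaX)) as [a0 [Ha0X Ha0min]].
  apply HX in Ha0X. destruct Ha0X as [Ha0k Ha0s]. cbn in Ha0s.
  assert (Hex: exists b1, mem b1 k /\ ~ (mem a0 b1 \/ a0 = b1 \/ mem b1 a0)).
  { apply NNPP; intro H. apply Ha0s. intros x Hx H1 H2. apply NNPP; intro H3.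
    apply H. exists x. split; auto. tauto. }
  destruct Hex as [b1 [Hb1k Hb1n]].
  destruct (ax_sep Z (FImp (cmpf 1 0) FBot) (fun _ => a0) Hks) as [Y [HYs HY]].
  assert (Hb1Y : mem b1 Y).
  { apply HY; split; auto; cbn; intro H; apply Hb1n; tauto. }
  destruct (ax_found Z Y (ex_intro _ b1 Hb1Y)) as [b0 [Hb0Y Hb0min]].
  apply HY in Hb0Y. destruct Hb0Y as [Hb0k Hb0n]. cbn in Hb0n.
  assert (E : a0 = b0).
  { destruct (Hel a0 Ha0k) as [Ha0s' Ha0t]. destruct (Hel b0 Hb0k) as [Hb0s' Hb0t].
    apply (ax_ext Z); auto. intro g; split; intro Hg.
    - assert (gk : mem g k) by (apply (proj2 (Hkt a0 Ha0k)); auto).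
      apply NNPP; intro Hc. apply Ha0min. exists g. split; auto. apply HX. split; auto.
      cbn. intro H. specialize (H b0 Hb0k).
      destruct (classic (g = b0)) as [Eg|Eg].
      + subst g. apply Hb0n. intros _ _. exact Hg.
      + assert (Hbg : mem b0 g) by (apply H; auto).
        apply Hb0n. intros _ _. apply (proj2 (Ha0t g Hg)). exact Hbg.
    - assert (gk : mem g k) by (apply (proj2 (Hkt b0 Hb0k)); auto).
      apply NNPP; intro Hc. apply Hb0min. exists g. split; auto. apply HY. split; auto.
      cbn. intro H. apply Hc. apply H.
      + intro Hag. apply Hb0n. intros h _. exfalso. apply h.
        apply (proj2 (Hb0t g Hg)). exact Hag.
      + intro Eag. apply Hb0n. intros h _. exfalso. apply h. rewrite Eag. exact Hg.
  }
  subst b0. apply Hb0n. intros _ h. exfalso; apply h; reflexivity.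
Qed.

Lemma nnand (A B : Prop) : ((A -> B -> False) -> False) -> A /\ B.
Proof. intro H; split; apply NNPP; intro; apply H; intros; auto. Qed.

Definition phiDC : form :=
  FImp (FImp (FUr 1) (FImp (FAll (FImp (FMem 0 1)
     (FAll (FImp (FMem 0 1) (FImp (FMem 3 0) FBot))))) FBot)) FBot.

Lemma fresh (M : Type) (mem : M -> M -> Prop) (U : M -> Prop) :
  ZFCU_R mem U -> A_proper_class mem U ->
  forall x, exists y, U y /\ forall p, mem p x -> forall q, mem q p -> ~ mem y q.
Proof.
  intros Z AP x.
  destruct (classic (U x)) as [Ux|Sx].
  - assert (exists y, U y) as [y Uy].
    { apply NNPP; intro H. apply AP.
      destruct (ax_inf Z) as [i [_ [[e [He _]] _]]].
      exists e. split; [exact (proj1 He)|]. intro z; split; intro Hz.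
      + exfalso; exact (proj2 He z Hz).
      + exfalso; apply H; exists z; exact Hz. }
    exists y. split; auto. intros p Hp. exfalso. exact (ax_urelements Z x Ux p Hp).
  - destruct (ax_union Z Sx) as [S1 [HS1s HS1]].
    destruct (ax_union Z HS1s) as [S2 [HS2s HS2]].
    apply NNPP; intro H. apply AP.
    destruct (ax_sep Z (FUr 0) (fun _ => x) HS2s) as [B [HBs HB]].
    exists B. split; auto. intro z; split; intro Hz.
    + apply HB in Hz. cbn in Hz. tauto.
    + apply HB. cbn. split; auto. apply NNPP; intro nz. apply H. exists z. split; auto.
      intros p Hp q Hq Hzq. apply nz. apply HS2. exists q. split; auto.
      apply HS1. exists p. auto.
Qed.

Theorem mainTheorem6 :
  forall (M : Type) (mem : M -> M -> Prop) (U : M -> Prop),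
    ZFCU_R mem U ->
    forall kappa : M,
      infinite_cardinal mem U kappa ->
      DC_scheme mem U kappa ->
      A_proper_class mem U ->
      realized mem U kappa.
Proof.
  intros M mem U Z k [[Hko Hkc] Hkinf] DC AP.
  destruct (DC phiDC ltac:(cbn; lia) k) as [f [Hf [Hdom Hval]]].
  { intro x. destruct (@fresh M mem U Z AP x) as [y [Uy Hy]]. exists y. cbn. intro H.
    apply H; [exact Uy|]. intros p Hp q Hq Hyq. exact (Hy p Hp q Hq Hyq). }
  destruct Hf as [Hfs [Hfp Hff]].
  destruct (ax_union Z Hfs) as [S1 [HS1s HS1]].
  destruct (ax_union Z HS1s) as [S2 [HS2s HS2]].
  destruct (ax_sep Z (FUr 0) (fun _ => k) HS2s) as [s [Hss Hs]].
  cbn in Hs.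
  assert (F4 : forall y, mem y k -> ~ U y).
  { intros y Hy. exact (proj1 (proj2 (proj1 Hko) y Hy)). }
  assert (F2 : forall a b, rel mem U f a b -> mem a k).
  { intros a b H. apply Hdom. exists b; exact H. }
  assert (F3 : forall a b, rel mem U f a b -> U b /\
     forall r, restr mem U f a r -> forall p, mem p r -> forall q, mem q p -> ~ mem b q).
  { intros a b H. destruct (Hval a (F2 _ _ H)) as [r [b' [Hr [Hb' Hsat]]]].
    cbn in Hsat. apply nnand in Hsat. destruct Hsat as [Ub' Hfr].
    assert (b = b') by (eapply Hff; eauto). subst b'.
    split; auto. intros r' Hr' p Hp q Hq Hbq.
    assert (mem p r).
    { apply (proj2 Hr). apply (proj2 Hr') in Hp. exact Hp. }
    exact (Hfr p H0 q Hq Hbq). }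
  assert (F1 : forall a b p, mem p f -> opair mem U a b p -> mem b S2 /\
               exists q, mem q p /\ mem b q).
  { intros a b p Hp Hop. destruct (ax_pair Z a b) as [z Hz].
    assert (mem z p) by (apply (proj2 Hop); auto).
    assert (mem b z) by (apply (proj2 Hz); auto).
    split; [|exists z; auto].
    apply HS2. exists z. split; auto. apply HS1. exists p. auto. }
  exists s. split; auto. split; [intros a Ha; apply Hs in Ha; tauto|].
  split; [exact (proj1 (proj1 Hko))|]. split; auto. exists f.
  split; auto. split.
  { intros p Hp. destruct (Hfp p Hp) as [a [b Hop]].
    assert (Hr : rel mem U f a b) by (exists p; auto).
    exists a, b. split; [eauto|]. split; auto. apply Hs. split.
    - exact (proj1 (F1 a b p Hp Hop)).
    - exact (proj1 (F3 a b Hr)). }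
  split; [intros a Ha; apply Hdom; exact Ha|].
  split; [exact Hff|].
  split.
  { intros a a' b Hab Ha'b.
    assert (Hak := F2 _ _ Hab). assert (Ha'k := F2 _ _ Ha'b).
    assert (key : forall x y, rel mem U f x b -> rel mem U f y b -> mem x k -> mem y k ->
              mem x y -> False).
    { intros x y Hx Hy Hxk Hyk Hxy.
      destruct (Hval y Hyk) as [r [b'' [Hr [Hb'' _]]]].
      destruct (F3 y b Hy) as [_ Hfr].
      destruct Hx as [p [Hp Hop]].
      destruct (F1 x b p Hp Hop) as [_ [q [Hq Hbq]]].
      refine (Hfr r Hr p _ q Hq Hbq).
      apply (proj2 Hr). split; auto. exists x, b. auto. }
    destruct (@trich M mem U Z k Hko a a' Hak Ha'k) as [H|[H|H]]; auto; exfalso; eauto. }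
  { intros b Hb. apply Hs in Hb. destruct Hb as [Hb2 Ub].
    apply HS2 in Hb2. destruct Hb2 as [q [Hq1 Hbq]].
    apply HS1 in Hq1. destruct Hq1 as [p [Hp Hqp]].
    destruct (Hfp p Hp) as [a [c Hop]].
    assert (Hr : rel mem U f a c) by (exists p; auto).
    apply (proj2 Hop) in Hqp.
    destruct Hqp as [Hq|Hq]; apply (proj2 Hq) in Hbq.
    - exfalso. assert (b = a) by tauto. subst. exact (F4 a (F2 _ _ Hr) Ub).
    - destruct Hbq as [E|E]; subst.
      + exfalso. exact (F4 a (F2 _ _ Hr) Ub).
      + exists a; exact Hr. }
Qed.
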